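(* Let $\mathfrak{g}$ be a $\mathrm{Lie}$-nilpotent Leibniz algebra and $f:\mathfrak{g}\twoheadrightarrow\mathfrak{q}$ a surjective homomorphism of Leibniz algebras. If $\ker(f)\subseteq[\mathfrak{g},\mathfrak{g}]_{\mathrm{Lie}}$ and $\mathcal{M}^{\mathrm{Lie}}(\mathfrak{q})=0$, then $f$ is an isomorphism. In particular, if $\mathcal{M}^{\mathrm{Lie}}(\mathfrak{g}/[\mathfrak{g},\mathfrak{g}]_{\mathrm{Lie}})=0$, then $\mathcal{M}^{\mathrm{Lie}}(\mathfrak{g})=0$.
   Context: Fix a field $\mathbb{K}$ with $\frac12\in\mathbb{K}$. A Leibniz algebra is a $\mathbb{K}$-vector space with a bilinear bracket satisfying $[x,[y,z]]=[[x,y],z]-[[x,z],y]$. For two-sided ideals $\mathfrak{m},\mathfrak{n}$, $[\mathfrak{m},\mathfrak{n}]_{\mathrm{Lie}}$ is the subspace spanned by all $[m,n]+[n,m]$. Lower $\mathrm{Lie}$-central series: $\mathfrak{g}^{[1]}=\mathfrak{g}$, $\mathfrak{g}^{[i]}=[\mathfrak{g}^{[i-1]},\mathfrak{g}]_{\mathrm{Lie}}$; $\mathfrak{g}$ is $\mathrm{Lie}$-nilpotent if some $\mathfrak{g}^{[k]}=0$. For a free presentation $0\to\mathfrak{r}\to\mathfrak{f}\to\mathfrak{g}\to0$ ($\mathfrak{f}$ free Leibniz), $\mathcal{M}^{\mathrm{Lie}}(\mathfrak{g})=\frac{\mathfrak{r}\cap[\mathfrak{f},\mathfrak{f}]_{\mathrm{Lie}}}{[\mathfrak{f},\mathfrak{r}]_{\mathrm{Lie}}}$,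 independent of the presentation up to isomorphism. *)

(* Defs.v *)
From HB Require Import structures.
From mathcomp Require Import all_boot all_algebra.
Set Implicit Arguments. Unset Strict Implicit. Unset Printing Implicit Defensive.
Import GRing.Theory.
Local Open Scope ring_scope.

Record leibnizAlgebra (K : fieldType) := LeibnizAlgebra {
  lcarrier :> lmodType K;
  lbr : lcarrier -> lcarrier -> lcarrier;
  lbr_addl : forall x y z, lbr (x + y) z = lbr x z + lbr y z;
  lbr_addr : forall x y z, lbr x (y + z) = lbr x y + lbr x z;
  lbr_scalel : forall (a : K) x y, lbr (a *: x) y = a *: lbr x y;
  lbr_scaler : forall (a : K) x y, lbr x (a *: y) = a *: lbr x y;
  lbr_leibniz : forall x y z, lbr x (lbr y z) = lbr (lbr x y) z - lbr (lbr x z) y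
}.
Arguments lbr {K} l x y.

Section Defs.
Variable K : fieldType.

Definition is_subspace (A : leibnizAlgebra K) (W : A -> Prop) :=
  W 0 /\ forall (a : K) (x y : A), W x -> W y -> W (a *: x + y).

Definition span (A : leibnizAlgebra K) (S : A -> Prop) : A -> Prop :=
  fun x => forall W : A -> Prop, is_subspace W -> (forall y, S y -> W y) -> W x.

Definition fullset (A : leibnizAlgebra K) : A -> Prop := fun _ => True.
Arguments fullset : clear implicits.

Definition lie_br (A : leibnizAlgebra K) (M N : A -> Prop) : A -> Prop :=
  @span A (fun x => exists m n, M m /\ N n /\ x = lbr A m n + lbr A n m).

(* lower Lie-central series, shifted: lie_lcs A n = g^[n+1]. *)
Fixpoint lie_lcs (A : leibnizAlgebra K) (n : nat) : A -> Prop :=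
  match n with
  | 0 => fullset A
  | n'.+1 => @lie_br A (@lie_lcs A n') (fullset A)
  end.

Definition lie_nilpotent (A : leibnizAlgebra K) :=
  exists k, forall x : A, @lie_lcs A k x -> x = 0.

Definition is_hom (A B : leibnizAlgebra K) (h : A -> B) :=
  (forall (a : K) (x y : A), h (a *: x + y) = a *: h x + h y) /\
  (forall x y : A, h (lbr A x y) = lbr B (h x) (h y)).

Definition is_free_leibniz (F : leibnizAlgebra K) (X : Type) (i : X -> F) :=
  forall (B : leibnizAlgebra K) (phi : X -> B),
    exists h : F -> B, [/\ is_hom h, (forall x, h (i x) = phi x) &
      forall h' : F -> B, is_hom h' -> (forall x, h' (i x) = phi x) ->
        forall y, h' y = h y].

(* M^Lie(A) = 0: for a free presentation 0 -> r -> F -> A -> 0 (r = ker pi),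
   (r ∩ [F,F]_Lie) / [F,r]_Lie = 0, i.e. r ∩ [F,F]_Lie ⊆ [F,r]_Lie.
   Since M^Lie is independent of the presentation, we require it for every
   free presentation. *)
Definition MLie_zero (A : leibnizAlgebra K) :=
  forall (F : leibnizAlgebra K) (X : Type) (i : X -> F) (pi : F -> A),
    is_free_leibniz i -> is_hom pi -> (forall a : A, exists y, pi y = a) ->
    forall y : F, pi y = 0 -> lie_br (fullset F) (fullset F) y ->
      lie_br (fullset F) (fun r => pi r = 0) y.

End Defs.
Arguments fullset {K} A _.

(* Main.v *)
Require Import Defs.
From HB Require Import structures.
From mathcomp Require Import all_boot all_algebra.
From mathcomp Require Import finmap.
From mathcomp.multinomials Require Import monalg.
Set Implicit Arguments. Unset Strict Implicit. Unset Printing Implicit Defensive.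
Import GRing.Theory.
Local Open Scope ring_scope.

Section Lin.
Variable K : fieldType.
Definition linP (U V : lmodType K) (L : U -> V) :=
  forall (a : K) x y, L (a *: x + y) = a *: L x + L y.

Variables (U V : lmodType K) (L : U -> V) (HL : linP L).
Lemma linP0 : L 0 = 0.
Proof.
have := HL 1 0 0; rewrite !scale1r addr0 => H.
by apply: (@addrI _ (L 0)); rewrite addr0 -H.
Qed.
Lemma linPD x y : L (x + y) = L x + L y.
Proof. by have := HL 1 x y; rewrite !scale1r. Qed.
Lemma linPZ a x : L (a *: x) = a *: L x.
Proof. by have := HL a x 0; rewrite !addr0 linP0 addr0. Qed.
Lemma linPN x : L (- x) = - L x.
Proof. by rewrite -scaleN1r linPZ scaleN1r. Qed.
Lemma linPB x y : L (x - y) = L x - L y.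
Proof. by rewrite linPD linPN. Qed.
Lemma linPsum (I : Type) (s : seq I) (F : I -> U) :
  L (\sum_(i <- s) F i) = \sum_(i <- s) L (F i).
Proof.
elim: s => [|i s IH]; first by rewrite !big_nil linP0.
by rewrite !big_cons linPD IH.
Qed.
End Lin.

Section Free.
Variables (K : fieldType) (X : choiceType).
Definition W := (X * seq X)%type.
Definition F0 := {malg K[W]}.
Definition e (w : W) : F0 := << w >>.

Definition lext (V : lmodType K) (f : W -> V) (v : F0) : V :=
  \sum_(k <- msupp v) v@_k *: f k.

Lemma lextEw (V : lmodType K) (f : W -> V) (d : {fset W}) v : (msupp v `<=` d)%fset ->
  lext f v = \sum_(k <- d) v@_k *: f k.
Proof.
move=> le; rewrite /lext [LHS](big_fset_incl _ le) => //= x xd /mcoeff_outdom ->.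
by rewrite scale0r.
Qed.

Lemma lext_lin (V : lmodType K) (f : W -> V) : linP (lext f).
Proof.
move=> a u v.
have le1 : (msupp u `<=` msupp u `|` msupp v)%fset by apply: fsubsetUl.
have le2 : (msupp v `<=` msupp u `|` msupp v)%fset by apply: fsubsetUr.
have le3 : (msupp (a *: u + v) `<=` msupp u `|` msupp v)%fset.
  apply: fsubset_trans (msuppD_le _ _) _.
  by apply: fsetSU; apply: msuppZ_le.
rewrite (lextEw _ le1) (lextEw _ le2) (lextEw _ le3) scaler_sumr -big_split /=.
apply: eq_bigr => k _; by rewrite mcoeffD mcoeffZ scalerDl scalerA.
Qed.

Lemma lextU (V : lmodType K) (f : W -> V) c k : lext f << c *g k >> = c *: f k.
Proof. by rewrite (lextEw _ msuppU_le) big_seq_fset1 mcoeffUU. Qed.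

Lemma lexte (V : lmodType K) (f : W -> V) k : lext f (e k) = f k.
Proof. by rewrite /e lextU scale1r. Qed.

Lemma monalgUZ c k : << c *g k >> = c *: e k :> F0.
Proof.
apply/malgP => k'; by rewrite mcoeffZ !mcoeffU mulr_natr.
Qed.

Lemma lin_lext (V : lmodType K) (L : F0 -> V) : linP L -> forall v, L v = lext (fun k => L (e k)) v.
Proof.
move=> HL v; rewrite {1}(monalgE v) linPsum //; apply: eq_bigr => k _.
by rewrite monalgUZ linPZ.
Qed.

Lemma lin_eq (V : lmodType K) (L1 L2 : F0 -> V) : linP L1 -> linP L2 ->
  (forall k, L1 (e k) = L2 (e k)) -> forall v, L1 v = L2 v.
Proof.
move=> H1 H2 He v; rewrite (lin_lext H1) (lin_lext H2).
by rewrite /lext; apply: eq_bigr => k _; rewrite He.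
Qed.

Lemma lin_comp (U V Y : lmodType K) (L1 : V -> Y) (L2 : U -> V) :
  linP L1 -> linP L2 -> linP (fun u => L1 (L2 u)).
Proof. by move=> H1 H2 a x y /=; rewrite H2 H1. Qed.

Lemma lin_sub (U V : lmodType K) (L1 L2 : U -> V) :
  linP L1 -> linP L2 -> linP (fun u => L1 u - L2 u).
Proof.
move=> H1 H2 a x y /=; rewrite H1 H2 scalerBr.
by rewrite opprD !addrA; congr (_ + _); rewrite addrAC.
Qed.

Definition wapp (w : W) (y : X) : W := (w.1, rcons w.2 y).
Definition Rgen (y : X) : F0 -> F0 := lext (fun w => e (wapp w y)).
Definition step (A : F0 -> F0) (y : X) : F0 -> F0 :=
  fun u => Rgen y (A u) - A (Rgen y u).
Definition R (w : W) : F0 -> F0 := foldl step (Rgen w.1) w.2.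
Definition br (u v : F0) : F0 := lext (fun w => R w u) v.

Lemma Rgen_lin y : linP (Rgen y). Proof. exact: lext_lin. Qed.
Lemma step_lin A y : linP A -> linP (step A y).
Proof.
move=> HA; apply: lin_sub; first exact: lin_comp (Rgen_lin y) HA.
exact: lin_comp HA (Rgen_lin y).
Qed.
Lemma foldl_lin s A : linP A -> linP (foldl step A s).
Proof. by elim: s A => [|y s IH] A HA //=; apply: IH; apply: step_lin. Qed.
Lemma R_lin w : linP (R w).
Proof. by apply: foldl_lin; apply: Rgen_lin. Qed.

Lemma R_rcons x s y u :
  R (x, rcons s y) u = Rgen y (R (x, s) u) - R (x, s) (Rgen y u).
Proof. by rewrite /R /= foldl_rcons. Qed.

Lemma R_wapp v y u : R (wapp v y) u = Rgen y (R v u) - R v (Rgen y u).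
Proof. by case: v => x s; rewrite /wapp R_rcons. Qed.

Lemma br_e u w : br u (e w) = R w u. Proof. exact: lexte. Qed.
Lemma Rgen_e y w : Rgen y (e w) = e (wapp w y). Proof. exact: lexte. Qed.

Lemma br_linr u : linP (br u). Proof. exact: lext_lin. Qed.
Lemma br_linl v : linP (fun u => br u v).
Proof.
move=> a x y; rewrite /br /lext scaler_sumr -big_split /=.
by apply: eq_bigr => k _; rewrite R_lin scalerDr !scalerA mulrC.
Qed.

Lemma zmod_id (V : zmodType) (a1 a2 a3 a4 a5 a8 : V) :
  ((a1 - a2) - (a3 - a4)) - ((a5 - a3) - (a2 - a8)) = (a1 - a5) - (a8 - a4).
Proof.
rewrite !opprB !addrA -!addrA.
rewrite (addrCA (-a2) a4) (addrCA (-a2) (-a3)) addKr (addrCA (-a3) (-a8)) addKr.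
congr (_ + _); by rewrite (addrC (-a8) (-a5)) addrCA.
Qed.

Lemma Jac_base x y u : br u (Rgen x y) = Rgen x (br u y) - br (Rgen x u) y.
Proof.
have H1 : linP (fun y => br u (Rgen x y)) := lin_comp (br_linr u) (Rgen_lin x).
have H2 : linP (fun y => Rgen x (br u y) - br (Rgen x u) y).
  exact: lin_sub (lin_comp (Rgen_lin x) (br_linr u)) (br_linr _).
move: y; apply: (lin_eq H1 H2) => w /=.
by rewrite Rgen_e !br_e R_wapp.
Qed.

Lemma Jac w y u : br u (R w y) = R w (br u y) - br (R w u) y.
Proof.
case: w => x s; elim/last_ind: s y u => [|s z IH] y u.
  exact: Jac_base.
rewrite !R_rcons (linPB (br_linr u)) !Jac_base !IH !Jac_base.
rewrite !(linPB (Rgen_lin z)) !(linPB (R_lin _)) !(linPB (br_linl y)).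
exact: zmod_id.
Qed.
End Free.

Section FreeAlg.
Variables (K : fieldType) (X : choiceType).

Lemma br_leibniz (x y z : F0 K X) : br x (br y z) = br (br x y) z - br (br x z) y.
Proof.
have H1 : linP (fun z => br x (br y z)) := lin_comp (br_linr x) (br_linr y).
have H2 : linP (fun z => br (br x y) z - br (br x z) y).
  exact: lin_sub (br_linr _) (lin_comp (br_linl y) (br_linr x)).
move: z; apply: (lin_eq H1 H2) => w /=.
by rewrite !br_e Jac.
Qed.

Definition FreeL : leibnizAlgebra K :=
  @LeibnizAlgebra K (F0 K X) (@br K X)
    (fun x y z => linPD (br_linl z) x y)
    (fun x y z => linPD (br_linr x) y z)
    (fun a x y => linPZ (br_linl y) a x)
    (fun a x y => linPZ (br_linr x) a y)
    br_leibniz.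

End FreeAlg.

Section Univ.
Variables (K : fieldType) (X : choiceType) (B : leibnizAlgebra K) (phi : X -> B).

Lemma lbr_linr (b : B) : linP (lbr B b).
Proof. by move=> a x y; rewrite lbr_addr lbr_scaler. Qed.
Lemma lbr_linl (b : B) : linP (fun x => lbr B x b).
Proof. by move=> a x y; rewrite lbr_addl lbr_scalel. Qed.

Definition hw (w : W X) : B := foldl (fun b y => lbr B b (phi y)) (phi w.1) w.2.
Definition hF : F0 K X -> B := lext hw.

Lemma hF_lin : linP hF. Proof. exact: lext_lin. Qed.

Lemma hF_Rgen x u : hF (Rgen x u) = lbr B (hF u) (phi x).
Proof.
have H1 : linP (fun u => hF (Rgen x u)) := lin_comp hF_lin (Rgen_lin x).
have H2 : linP (fun u => lbr B (hF u) (phi x)) := lin_comp (lbr_linl _) hF_lin.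
move: u; apply: (lin_eq H1 H2) => w /=.
rewrite Rgen_e /hF !lexte; case: w => y s.
by rewrite /hw /wapp /= foldl_rcons.
Qed.

Lemma hF_R w u : hF (R w u) = lbr B (hF u) (hw w).
Proof.
case: w => x s; elim/last_ind: s u => [|s z IH] u.
  exact: hF_Rgen.
rewrite R_rcons (linPB hF_lin) !hF_Rgen !IH hF_Rgen.
by rewrite /hw /= foldl_rcons lbr_leibniz.
Qed.

Lemma hF_br u v : hF (br u v) = lbr B (hF u) (hF v).
Proof.
have H1 : linP (fun v => hF (br u v)) := lin_comp hF_lin (br_linr u).
have H2 : linP (fun v => lbr B (hF u) (hF v)) := lin_comp (lbr_linr _) hF_lin.
move: v; apply: (lin_eq H1 H2) => w /=.
by rewrite br_e hF_R /hF lexte.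
Qed.
End Univ.

Definition ins (K : fieldType) (X : choiceType) (x : X) : FreeL K X := e K (x, [::]).

Lemma FreeL_free (K : fieldType) (X : choiceType) : is_free_leibniz (@ins K X).
Proof.
move=> B phi; exists (hF phi); split.
- split; first exact: hF_lin.
  exact: hF_br.
- by move=> x; rewrite /hF /ins lexte.
move=> h' [h'lin h'br] h'i.
have Hw : forall w, h' (e K w) = hw phi w.
  case=> x s; elim/last_ind: s => [|s z IH]; first exact: h'i.
  have -> : e K (x, rcons s z) = br (e K (x, s)) (ins K z).
    by rewrite /ins br_e /R /= Rgen_e.
  rewrite (h'br (e K (x, s)) (ins K z)) IH h'i.
  by rewrite /hw /= foldl_rcons.
apply: (lin_eq h'lin (@hF_lin _ _ _ phi)) => w.
by rewrite Hw /hF lexte.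
Qed.

Section Main.
Variable K : fieldType.

Lemma span_subspace (A : leibnizAlgebra K) (S : A -> Prop) : is_subspace (Defs.span S).
Proof.
split; first by move=> W [].
move=> a x y Hx Hy W HW HS; case: (HW) => _ Hc; apply: Hc; [exact: Hx | exact: Hy].
Qed.

Lemma span_in (A : leibnizAlgebra K) (S : A -> Prop) y : S y -> Defs.span S y.
Proof. by move=> Hy W _ HS; apply: HS. Qed.

Lemma span_ind (A : leibnizAlgebra K) (S W : A -> Prop) :
  is_subspace W -> (forall y, S y -> W y) -> forall x, Defs.span S x -> W x.
Proof. by move=> HW HS x Hx; apply: Hx. Qed.

Lemma lie_br_mono (A : leibnizAlgebra K) (M N M' N' : A -> Prop) :
  (forall x, M x -> M' x) -> (forall x, N x -> N' x) ->
  forall x, lie_br M N x -> lie_br M' N' x.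
Proof.
move=> HM HN; apply: span_ind; first exact: span_subspace.
move=> y [m [n [Hm [Hn ->]]]]; apply: span_in.
by exists m, n; split; [apply: HM | split; [apply: HN|]].
Qed.

Lemma lie_br_sym (A : leibnizAlgebra K) (M N : A -> Prop) x :
  lie_br M N x -> lie_br N M x.
Proof.
apply: span_ind x; first exact: span_subspace.
move=> y [m [n [Hm [Hn ->]]]]; apply: span_in.
by exists n, m; split => //; split => //; rewrite addrC.
Qed.

Section Hom.
Variables (A B : leibnizAlgebra K) (p : A -> B) (hp : is_hom p).
Lemma hom_lin : linP p. Proof. by case: hp. Qed.
Lemma hom_br x y : p (lbr A x y) = lbr B (p x) (p y). Proof. by case: hp. Qed.

Lemma img_span (SA : A -> Prop) (SB : B -> Prop) :
  (forall b, SB b -> exists a, SA a /\ p a = b) ->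
  forall b, Defs.span SB b -> exists a, Defs.span SA a /\ p a = b.
Proof.
move=> H; apply: span_ind.
  split.
    exists 0; split; first by case: (span_subspace SA).
    exact: linP0 hom_lin.
  move=> c x y [a1 [H1 <-]] [a2 [H2 <-]]; exists (c *: a1 + a2); split.
    by case: (span_subspace SA) => _ Hc; apply: Hc.
  exact: hom_lin.
move=> b /H [a [Ha <-]]; exists a; split => //; exact: span_in.
Qed.

Lemma preimg_span (SA : A -> Prop) (WB : B -> Prop) :
  is_subspace WB -> (forall a, SA a -> WB (p a)) ->
  forall a, Defs.span SA a -> WB (p a).
Proof.
move=> [W0 Wc] H; apply: span_ind => //.
split; first by rewrite (linP0 hom_lin).
by move=> c x y Hx Hy; rewrite hom_lin; apply: Wc.
Qed.
End Hom.

Lemma hom_comp (A B C : leibnizAlgebra K) (p : A -> B) (f : B -> C) :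
  is_hom p -> is_hom f -> is_hom (fun x => f (p x)).
Proof.
move=> [p1 p2] [f1 f2]; split.
  by move=> a x y; rewrite p1 f1.
by move=> x y; rewrite p2 f2.
Qed.

Lemma part1 (g q : leibnizAlgebra K) (f : g -> q) :
     lie_nilpotent g -> is_hom f -> (forall b : q, exists a, f a = b) ->
     (forall x : g, f x = 0 -> lie_br (fullset g) (fullset g) x) ->
     MLie_zero q ->
     forall x, f x = 0 -> x = 0.
Proof.
move=> [k Hk] fhom fsurj Hker HM.
pose F := FreeL K g.
have Hfree := @FreeL_free K g.
have [p [phom ppi _]] := Hfree g id.
pose pi := fun y => f (p y).
have pihom : is_hom pi := hom_comp phom fhom.
have pisurj : forall b : q, exists y : F, pi y = b.
  move=> b; have [a Ha] := fsurj b; exists (ins K a); by rewrite /pi ppi.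
have HMap := HM F g (@ins K g) pi Hfree pihom pisurj.
have N : forall x, f x = 0 -> lie_br (fullset g) (fun n => f n = 0) x.
  move=> x fx0.
  have Hgen : forall b, (exists m n, fullset g m /\ fullset g n /\ b = lbr g m n + lbr g n m) ->
      exists a, (exists m n, fullset F m /\ fullset F n /\ a = lbr F m n + lbr F n m) /\ p a = b.
    move=> b [m [n [_ [_ ->]]]].
    exists (lbr F (ins K m) (ins K n) + lbr F (ins K n) (ins K m)); split.
      by exists (ins K m), (ins K n).
    by rewrite (linPD (hom_lin phom)) !(hom_br phom) !ppi.
  have [y [Hy Hpy]] := img_span phom Hgen (Hker x fx0).
  have piy : pi y = 0 by rewrite /pi Hpy.
  rewrite -Hpy; have := HMap y piy Hy.
  apply: (preimg_span phom); first exact: span_subspace.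
  move=> a [m [n [_ [Hn ->]]]]; apply: span_in.
  exists (p m), (p n); split => //; split; first exact: Hn.
  by rewrite (linPD (hom_lin phom)) !(hom_br phom).
have Hl : forall (n : nat) (x : g), f x = 0 -> lie_lcs n x.
  elim=> [|n IH] x Hx /=; first by rewrite /fullset.
  apply: lie_br_sym; apply: (lie_br_mono _ _ (N x Hx)) => // y Hy.
by move=> x Hx; apply: Hk; apply: Hl.
Qed.

End Main.

Theorem mainTheorem10 (K : fieldType) (half : (2%:R : K) != 0) :
  (forall (g q : leibnizAlgebra K) (f : g -> q),
     lie_nilpotent g -> is_hom f -> (forall b : q, exists a, f a = b) ->
     (forall x : g, f x = 0 -> lie_br (fullset g) (fullset g) x) ->
     MLie_zero q ->
     bijective f)
  /\
  (forall (g q : leibnizAlgebra K) (f : g -> q),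
     lie_nilpotent g -> is_hom f -> (forall b : q, exists a, f a = b) ->
     (forall x : g, f x = 0 <-> lie_br (fullset g) (fullset g) x) ->
     MLie_zero q ->
     MLie_zero g).
Proof.
have inj : forall (g q : leibnizAlgebra K) (f : g -> q),
     lie_nilpotent g -> is_hom f -> (forall b : q, exists a, f a = b) ->
     (forall x : g, f x = 0 -> lie_br (fullset g) (fullset g) x) ->
     MLie_zero q -> injective f.
  move=> g q f Hn fhom fs Hk HM x y Hxy.
  have H0 := part1 Hn fhom fs Hk HM.
  apply/eqP; rewrite -subr_eq0; apply/eqP; apply: H0.
  by rewrite (linPB (hom_lin fhom)) Hxy subrr.
split.
  move=> g q f Hn fhom fs Hk HM.
  have finj := inj g q f Hn fhom fs Hk HM.
  have fs' : forall b : q, exists a, f a == b.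
    by move=> b; have [a Ha] := fs b; exists a; rewrite Ha.
  exists (fun b => xchoose (fs' b)).
    by move=> a; apply: finj; apply/eqP; exact: (xchooseP (fs' (f a))).
  by move=> b; apply/eqP; exact: (xchooseP (fs' b)).
move=> g q f Hn fhom fs Hk HM.
have finj := inj g q f Hn fhom fs (fun x => proj1 (Hk x)) HM.
move=> F X i pi Hfree pihom pis y Hy0 Hy.
have Hc : is_hom (fun x => f (pi x)) := hom_comp pihom fhom.
have Hs : forall b : q, exists y, f (pi y) = b.
  move=> b; have [a <-] := fs b; have [z <-] := pis a; by exists z.
have Hf0 : f (pi y) = 0 by rewrite Hy0 (linP0 (hom_lin fhom)).
have := HM F X i _ Hfree Hc Hs y Hf0 Hy.
apply: lie_br_mono => // r Hr.
apply: finj; by rewrite Hr (linP0 (hom_lin fhom)).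
Qed.
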